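(* If $f\colon X\to Y$ is a Lipschitz function of metric spaces, then $\dim_{AN}(X)\le \dim_{AN}(f)+\dim_{AN}(Y)$.
   Context: For a metric space $X$, $n\ge0$: an $n$-dimensional control function of $X$ is $D_X\colon\mathbb R_+\to\mathbb R_+$ such that for each $r>0$ there are families $\mathcal U_1,\dots,\mathcal U_{n+1}$ of subsets of $X$, each $r$-disjoint (points in different members at distance $\ge r$), with members of diameter $\le D_X(r)$, whose union covers $X$. $\dim_{AN}(X)\le n$ iff $X$ has an $n$-dimensional control function of the form $D_X(r)=cr$ for some $c>0$. For $r>0$, the $r$-components of $A\subset X$ are the classes of points of $A$ joined by finite sequences in $A$ with consecutive distances $\le r$. An $m$-dimensional control function of $f\colon X\to Y$ is $D_f\colon\mathbb R_+\times\mathbb R_+\to\mathbb R_+$ such that for all $r_X,R_Y>0$ every $A\subset X$ with $\operatorname{diam} f(A)\le R_Y$ is a union of $m+1$ sets whose $r_X$-components have diameter $\le D_f(r_X,R_Y)$. $\dim_{AN}(f)$ is the minimal $m$ for which $f$ has an $m$-dimensional control function of the form $D_f(r_X,R_Y)=a r_X+bR_Y$ (constants $a,b$). *)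

(* Defs.v *)
From Stdlib Require Import Reals.
Open Scope R_scope.

Record MetricSpace := {
  mcarrier :> Type;
  dist : mcarrier -> mcarrier -> R;
  dist_eq0 : forall x y, dist x y = 0 <-> x = y;
  dist_sym : forall x y, dist x y = dist y x;
  dist_tri : forall x y z, dist x z <= dist x y + dist y z
}.

Arguments dist {m} _ _.

Definition Lipschitz {X Y : MetricSpace} (f : X -> Y) : Prop :=
  exists L : R, 0 <= L /\ forall x y : X, dist (f x) (f y) <= L * dist x y.

Definition family (X : MetricSpace) := (X -> Prop) -> Prop.

Definition r_disjoint {X : MetricSpace} (r : R) (F : family X) : Prop :=
  forall U V, F U -> F V -> U <> V ->
    forall x y, U x -> V y -> r <= dist x y.

Definition diam_le {X : MetricSpace} (A : X -> Prop) (D : R) : Prop :=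
  forall x y, A x -> A y -> dist x y <= D.

Definition members_bounded {X : MetricSpace} (D : R) (F : family X) : Prop :=
  forall U, F U -> diam_le U D.

Definition space_control_fn (X : MetricSpace) (n : nat) (D : R -> R) : Prop :=
  forall r, 0 < r ->
    exists U : nat -> family X,
      (forall i, (i <= n)%nat -> r_disjoint r (U i) /\ members_bounded (D r) (U i)) /\
      (forall x : X, exists i, (i <= n)%nat /\ exists V, U i V /\ V x).

Definition ANdim_le (X : MetricSpace) (n : nat) : Prop :=
  exists c : R, 0 < c /\ space_control_fn X n (fun r => c * r).

Inductive r_chain {X : MetricSpace} (B : X -> Prop) (r : R) : X -> X -> Prop :=
  | r_chain_refl : forall x, B x -> r_chain B r x x
  | r_chain_step : forall x y z, r_chain B r x y -> B z -> dist y z <= r ->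
                    r_chain B r x z.

Definition components_diam_le {X : MetricSpace} (B : X -> Prop) (r D : R) : Prop :=
  forall x y, r_chain B r x y -> dist x y <= D.

Definition map_control_fn {X Y : MetricSpace} (f : X -> Y) (m : nat)
    (D : R -> R -> R) : Prop :=
  forall rX RY, 0 < rX -> 0 < RY ->
    forall A : X -> Prop,
      (forall x y, A x -> A y -> dist (f x) (f y) <= RY) ->
      exists B : nat -> (X -> Prop),
        (forall i x, (i <= m)%nat -> B i x -> A x) /\
        (forall x, A x -> exists i, (i <= m)%nat /\ B i x) /\
        (forall i, (i <= m)%nat -> components_diam_le (B i) rX (D rX RY)).

Definition map_linear_control {X Y : MetricSpace} (f : X -> Y) (m : nat) : Prop :=
  exists a b : R, 0 <= a /\ 0 <= b /\
    map_control_fn f m (fun rX RY => a * rX + b * RY).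

Definition map_ANdim_le {X Y : MetricSpace} (f : X -> Y) (m : nat) : Prop :=
  exists k, (k <= m)%nat /\ map_linear_control f k.

(* Main.v *)
Require Import Defs.
From Stdlib Require Import Reals.
From Stdlib Require Import Reals Lra Lia Classical IndefiniteDescription FunctionalExtensionality PropExtensionality.
Require Import Defs.
Open Scope R_scope.

Lemma dist_self (X : MetricSpace) (x : X) : dist x x = 0.
Proof. apply (proj2 (dist_eq0 X x x)). reflexivity. Qed.

Lemma dist_nonneg (X : MetricSpace) (x y : X) : 0 <= dist x y.
Proof.
  pose proof (dist_tri X x y x). rewrite dist_self in H. rewrite (dist_sym X y x) in H. lra.
Qed.


Lemma chain_B_l {X : MetricSpace} (B : X -> Prop) r x y : r_chain B r x y -> B x.
Proof. induction 1; auto. Qed.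

Lemma chain_B_r {X : MetricSpace} (B : X -> Prop) r x y : r_chain B r x y -> B y.
Proof. induction 1; auto. Qed.

Lemma chain_concat {X : MetricSpace} (B : X -> Prop) r x y z :
  r_chain B r x y -> r_chain B r y z -> r_chain B r x z.
Proof.
  intros H1 H2. revert H1. induction H2; intros H1; auto.
  eapply r_chain_step; [apply IHr_chain; exact H1 | auto | auto].
Qed.

Lemma chain_rev {X : MetricSpace} (B : X -> Prop) r x y :
  r_chain B r x y -> r_chain B r y x.
Proof.
  induction 1. apply r_chain_refl; auto.
  eapply chain_concat; [|exact IHr_chain].
  eapply r_chain_step. apply r_chain_refl; auto. eapply chain_B_r; eauto.
  rewrite dist_sym; auto.
Qed.

Lemma chain_mono {X : MetricSpace} (B B' : X -> Prop) r r' x y :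
  (forall z, B z -> B' z) -> r <= r' -> r_chain B r x y -> r_chain B' r' x y.
Proof.
  intros HB Hr. induction 1. apply r_chain_refl; auto.
  eapply r_chain_step; eauto. lra.
Qed.

Lemma cd_mono {X : MetricSpace} (B B' : X -> Prop) r r' D D' :
  components_diam_le B' r' D -> (forall z, B z -> B' z) -> r <= r' -> D <= D' ->
  components_diam_le B r D'.
Proof.
  intros H HB Hr HD x y Hc. eapply Rle_trans; [|exact HD]. apply H.
  eapply chain_mono; eauto.
Qed.

Lemma chain_stay {X : MetricSpace} (B P : X -> Prop) r x y :
  (forall y z, B y -> B z -> P y -> dist y z <= r -> P z) ->
  r_chain B r x y -> P x -> r_chain (fun z => B z /\ P z) r x y.
Proof.
  intros HP. induction 1; intros Px. apply r_chain_refl; auto.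
  specialize (IHr_chain Px). eapply r_chain_step; eauto. split; auto.
  destruct (chain_B_r _ _ _ _ IHr_chain) as [By Py]. eapply HP; eauto.
Qed.

Definition near {X : MetricSpace} (rho : R) (C : X -> Prop) (x : X) : Prop :=
  exists q, C q /\ dist x q <= rho.

Lemma near_cd {X : MetricSpace} (C : X -> Prop) rho D :
  components_diam_le C (3 * rho) D -> components_diam_le (near rho C) rho (D + 2 * rho).
Proof.
  intros H x y Hc.
  assert (exists qx qy, dist x qx <= rho /\ dist y qy <= rho /\ r_chain C (3 * rho) qx qy) as
    (qx & qy & H1 & H2 & H3).
  { induction Hc as [x [q [Cq Hq]] | x y z Hc IH [q [Cq Hq]] Hyz].
    - exists q, q. repeat split; auto. apply r_chain_refl; auto.
    - destruct IH as (qx & qy & H1 & H2 & H3). exists qx, q. repeat split; auto.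
      eapply r_chain_step; eauto.
      pose proof (dist_tri X qy y q). pose proof (dist_tri X y z q).
      rewrite (dist_sym X qy y) in *. lra. }
  pose proof (H _ _ H3).
  pose proof (dist_tri X x qx y). pose proof (dist_tri X qx qy y).
  rewrite (dist_sym X qy y) in *. lra.
Qed.

Lemma sat_cd {X : MetricSpace} (B S Z : X -> Prop) (s rho DS DZ : R) :
  (forall x, B x -> S x \/ Z x) -> components_diam_le S s DS -> components_diam_le Z rho DZ ->
  0 <= rho -> rho <= s -> 2 * rho + DZ <= s -> 0 <= DZ -> 0 <= DS ->
  components_diam_le B rho (DS + 2 * (rho + DZ)).
Proof.
  intros HB HS HZ Hr1 Hr2 Hs HDZ HDS.
  set (Att := fun p x => S p /\ (x = p \/ exists z, r_chain Z rho z x /\ dist z p <= rho)).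
  assert (Hatt : forall p x, Att p x -> dist x p <= rho + DZ).
  { intros p x [_ [-> | [z [Hz1 Hz2]]]]. rewrite dist_self; lra.
    pose proof (HZ _ _ Hz1). pose proof (dist_tri X x z p). rewrite (dist_sym X x z) in *. lra. }
  intros x y Hc.
  assert (r_chain Z rho x y \/ exists p q, Att p x /\ Att q y /\ r_chain S s p q) as Hinv.
  { induction Hc as [x Bx | x y w Hc IH Bw Hyw].
    - destruct (HB x Bx) as [Sx | Zx].
      + right. exists x, x. unfold Att. repeat split; auto. apply r_chain_refl; auto.
      + left. apply r_chain_refl; auto.
    - destruct (classic (S w)) as [Sw | nSw].
      + right. destruct IH as [IH | (p & q & Ap & Aq & Hpq)].
        * exists w, w. unfold Att. repeat split; auto. right. exists y. split; auto.
          apply chain_rev; auto. apply r_chain_refl; auto.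
        * exists p, w. split; [exact Ap|]. split; [split; auto|].
          eapply r_chain_step; [exact Hpq|exact Sw|].
          destruct Aq as [_ [-> | [z [Hz1 Hz2]]]]. lra.
          pose proof (HZ _ _ Hz1). pose proof (dist_tri X q z w). pose proof (dist_tri X z y w).
          rewrite (dist_sym X q z) in *. lra.
      + assert (Zw : Z w) by (destruct (HB w Bw); tauto).
        destruct IH as [IH | (p & q & Ap & Aq & Hpq)].
        * left. eapply r_chain_step; eauto.
        * right. exists p, q. split; [exact Ap|]. split; [|exact Hpq].
          destruct Aq as [Sq [-> | [z [Hz1 Hz2]]]]; split; auto; right.
          -- exists w. split. apply r_chain_refl; auto. rewrite dist_sym; auto.
          -- exists z. split; auto. eapply r_chain_step; eauto. }
  destruct Hinv as [Hz | (p & q & Ap & Aq & Hpq)].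
  - pose proof (HZ _ _ Hz). lra.
  - pose proof (Hatt _ _ Ap). pose proof (Hatt _ _ Aq). pose proof (HS _ _ Hpq).
    pose proof (dist_tri X x p y). pose proof (dist_tri X p q y).
    rewrite (dist_sym X x p), (dist_sym X y q) in *. lra.
Qed.

Definition Nst {X Y : MetricSpace} (f : X -> Y) (n k : nat) (U : nat -> family Y)
  (Bd : nat -> (Y -> Prop) -> nat -> X -> Prop) (rho : nat -> R)
  (i : nat) (C : nat -> X -> Prop) (u : nat) (x : X) : Prop :=
  (i <= n)%nat /\ (u <= i + k)%nat /\
  (exists V, U i V /\ V (f x) /\ exists j, (j <= k)%nat /\ (i + j <= u)%nat /\ Bd i V j x /\
     forall t, (i + j <= t)%nat -> (t < u)%nat -> near (rho i) (C t) x) /\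
  ~ near (rho i) (C u) x.

Fixpoint Cb {X Y : MetricSpace} (f : X -> Y) (n k : nat) (U : nat -> family Y)
  (Bd : nat -> (Y -> Prop) -> nat -> X -> Prop) (rho : nat -> R) (i : nat) : nat -> X -> Prop :=
  match i with
  | O => fun _ _ => False
  | S i' => fun u x => Cb f n k U Bd rho i' u x \/ Nst f n k U Bd rho i' (Cb f n k U Bd rho i') u x
  end.

Lemma Cb_bound {X Y : MetricSpace} f n k U Bd rho i u (x : X) :
  @Cb X Y f n k U Bd rho i u x -> (u < i + k)%nat.
Proof.
  revert u x. induction i; simpl; intros u x H. contradiction.
  destruct H as [H | (_ & H & _)]. apply IHi in H. lia. lia.
Qed.

Lemma Cb_mono {X Y : MetricSpace} f n k U Bd rho i i' u (x : X) :
  (i <= i')%nat -> @Cb X Y f n k U Bd rho i u x -> Cb f n k U Bd rho i' u x.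
Proof.
  induction 1; auto. intros H0. simpl. left. auto.
Qed.

Lemma first_u (Q : nat -> Prop) lo d : Q (lo + d)%nat ->
  exists u, (lo <= u <= lo + d)%nat /\ Q u /\ forall t, (lo <= t)%nat -> (t < u)%nat -> ~ Q t.
Proof.
  revert lo. induction d; intros lo H.
  - exists lo. split. lia. split. rewrite Nat.add_0_r in H; auto. intros; lia.
  - destruct (classic (Q lo)) as [Hq | Hq].
    + exists lo. split. lia. split; auto. intros; lia.
    + replace (lo + S d)%nat with (S lo + d)%nat in H by lia.
      destruct (IHd (S lo) H) as (u & H1 & H2 & H3). exists u. split. lia. split; auto.
      intros t Ht1 Ht2. destruct (Nat.eq_dec t lo) as [-> | ne]; auto. apply H3; lia.
Qed.

Lemma step_lemma {X Y : MetricSpace} (f : X -> Y) n k U Bd rho (i : nat) (L R' s DP E : R) :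
  (forall x y, dist (f x) (f y) <= L * dist x y) -> 0 <= L ->
  (forall V V', U i V -> U i V' -> V <> V' -> forall y y', V y -> V' y' -> R' <= dist y y') ->
  L * rho i < R' -> 0 < R' ->
  (forall V, U i V -> forall j, (j <= k)%nat -> components_diam_le (Bd i V j) s DP) ->
  (forall t, components_diam_le (Cb f n k U Bd rho i t) (3 * rho i) E) ->
  0 <= E -> 0 <= rho i -> 4 * rho i + E <= s -> 0 <= DP ->
  forall u, components_diam_le (Cb f n k U Bd rho (S i) u) (rho i)
              (E + (DP + 2 * (rho i + (E + 2 * rho i)))).
Proof.
  intros HL HL0 Hdisj HLr HR' HBd HC HE Hr Hs HDP u.
  set (C := Cb f n k U Bd rho i). set (N := Nst f n k U Bd rho i C u).
  change (components_diam_le (fun x => C u x \/ N x) (rho i) (E + (DP + 2 * (rho i + (E + 2 * rho i))))).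
  intros x y Hc.
  assert (Hx0 : C u x \/ N x) by exact (chain_B_l _ _ _ _ Hc).
  destruct Hx0 as [Cx | Nx].
  - assert (Hst : forall y0 z, (fun x => C u x \/ N x) y0 -> (fun x => C u x \/ N x) z -> C u y0 -> dist y0 z <= rho i -> C u z).
    { intros y0 z Hy Hz Py Hyz. cbv beta in Hz. destruct Hz as [Cz | Nz]; [exact Cz|].
      unfold N, Nst in Nz. destruct Nz as (_ & _ & _ & Hn). exfalso; apply Hn.
      exists y0; split; auto; rewrite dist_sym; auto. }
    assert (Hc' := chain_stay _ (C u) _ _ _ Hst Hc Cx).
    assert (dist x y <= E).
    { apply (HC u). eapply chain_mono; [| | exact Hc']. intros z [_ Hz]; exact Hz. lra. }
    assert (0 <= DP + 2 * (rho i + (E + 2 * rho i))) by lra. lra.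
  - assert (Hst : forall y0 z, (fun x => C u x \/ N x) y0 -> (fun x => C u x \/ N x) z -> N y0 -> dist y0 z <= rho i -> N z).
    { intros y0 z Hy Hz Py Hyz. cbv beta in Hz. destruct Hz as [Cz | Nz]; [|exact Nz].
      unfold N, Nst in Py. destruct Py as (_ & _ & _ & Hn). exfalso; apply Hn.
      exists z; split; auto. }
    assert (Hc' := chain_stay _ N _ _ _ Hst Hc Nx).
    pose proof Nx as Nx0. unfold N, Nst in Nx.
    destruct Nx as (Hin & Huk & (V & UV & Vfx & _) & _).
    assert (Hband : forall z, N z -> V (f z) -> forall V', U i V' -> V' (f z) -> V' = V).
    { intros z _ Vz V' UV' V'z. destruct (classic (V' = V)) as [e | ne]; auto.
      exfalso. pose proof (Hdisj V' V UV' UV ne _ _ V'z Vz). rewrite dist_self in H. lra. }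
    assert (Hst2 : forall y0 z, (fun z => (C u z \/ N z) /\ N z) y0 -> (fun z => (C u z \/ N z) /\ N z) z -> V (f y0) -> dist y0 z <= rho i -> V (f z)).
    { intros y0 z [_ Ny] [_ Nz] Py Hyz.
        unfold N, Nst in Nz. destruct Nz as (_ & _ & (V' & UV' & V'z & _) & _).
        destruct (classic (V' = V)) as [<- | ne]; [exact V'z | exfalso].
        pose proof (Hdisj V V' UV UV' (fun e => ne (eq_sym e)) _ _ Py V'z).
        pose proof (HL y0 z). pose proof (Rmult_le_compat_l L _ _ HL0 Hyz). lra. }
    assert (Hc2 := chain_stay _ (fun z => V (f z)) _ _ _ Hst2 Hc' Vfx).
    set (S0 := fun z => exists j, (j <= k)%nat /\ (i + j = u)%nat /\ Bd i V j z).
    set (Z := near (rho i) (C (u - 1)%nat)).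
    assert (HSZ : forall z, ((C u z \/ N z) /\ N z) /\ V (f z) -> S0 z \/ Z z).
    { intros z [[_ Nz] Vz]. pose proof Nz as Nz'. unfold N, Nst in Nz.
      destruct Nz as (_ & _ & (V' & UV' & V'z & j & Hj & Hiju & HB & Hnear) & _).
      pose proof (Hband z Nz' Vz V' UV' V'z); subst V'.
      destruct (Nat.eq_dec (i + j) u) as [e | ne].
      - left. exists j. auto.
      - right. apply Hnear; lia. }
    assert (HS0 : components_diam_le S0 s DP).
    { intros x0 y0 Hc0. destruct (chain_B_l _ _ _ _ Hc0) as (j0 & Hj0 & Hij0 & _).
      apply (HBd V UV j0 Hj0). eapply chain_mono; [| | exact Hc0]; [| lra].
      intros z (j & Hj & Hij & Hb). replace j0 with j by lia. exact Hb. }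
    assert (HZ : components_diam_le Z (rho i) (E + 2 * rho i)).
    { apply near_cd. apply HC. }
    assert (H := sat_cd _ S0 Z s (rho i) DP (E + 2 * rho i) HSZ HS0 HZ Hr ltac:(lra) ltac:(lra)
                  ltac:(lra) HDP).
    pose proof (H _ _ Hc2). lra.
Qed.

Fixpoint Ec (a b c L : R) (n i : nat) : R :=
  match i with
  | O => 0
  | S i' => Ec a b c L n i' + ((a * (4 * 3 ^ (n - i') + Ec a b c L n i') + b * (c * (2 * L * 3 ^ n)))
            + 2 * (3 ^ (n - i') + (Ec a b c L n i' + 2 * 3 ^ (n - i'))))
  end.

Lemma Ec_nonneg a b c L n i : 0 <= a -> 0 <= b -> 0 <= c -> 0 <= L -> 0 <= Ec a b c L n i.
Proof.
  intros Ha Hb Hc HL. induction i; simpl. lra.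
  pose proof (pow_le 3 (n - i) ltac:(lra)). pose proof (pow_le 3 n ltac:(lra)).
  assert (0 <= a * (4 * 3 ^ (n - i) + Ec a b c L n i)) by (apply Rmult_le_pos; lra).
  assert (0 <= b * (c * (2 * L * 3 ^ n))).
  { apply Rmult_le_pos; auto. apply Rmult_le_pos; auto. apply Rmult_le_pos; lra. }
  lra.
Qed.

Theorem mainTheorem4 (X Y : MetricSpace) (f : X -> Y) (m n : nat) :
  Lipschitz f -> map_ANdim_le f m -> ANdim_le Y n -> ANdim_le X (m + n).
Proof.
  intros [L [HL0 HL]] [k [Hkm [a [b [Ha [Hb Hctl]]]]]] [c [Hc HY]].
  set (L' := L + 1).
  assert (HL' : forall x y, dist (f x) (f y) <= L' * dist x y).
  { intros x y. pose proof (HL x y). pose proof (dist_nonneg X x y). unfold L'. nra. }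
  exists (Ec a b c L' n (S n) + 1). split.
  { pose proof (Ec_nonneg a b c L' n (S n) Ha Hb ltac:(lra) ltac:(unfold L'; lra)). lra. }
  intros r Hr.
  set (rho := fun i : nat => 3 ^ (n - i) * r).
  set (R' := 2 * L' * rho 0%nat).
  assert (Hrho : forall i, 0 < rho i).
  { intros i. unfold rho. apply Rmult_lt_0_compat; auto. apply pow_lt. lra. }
  assert (Hrho0 : forall i, rho i <= rho 0%nat).
  { intros i. unfold rho. apply Rmult_le_compat_r; [lra|]. apply Rle_pow; [lra| lia]. }
  assert (HR' : 0 < R').
  { unfold R'. pose proof (Hrho 0%nat). unfold L'. nra. }
  destruct (HY R' HR') as [U [HU1 HU2]].
  set (s := fun i : nat => (4 * 3 ^ (n - i) + Ec a b c L' n i) * r).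
  assert (Hs : forall i, 0 < s i).
  { intros i. unfold s. apply Rmult_lt_0_compat; auto.
    pose proof (pow_lt 3 (n - i) ltac:(lra)).
    pose proof (Ec_nonneg a b c L' n i Ha Hb ltac:(lra) ltac:(unfold L'; lra)). lra. }
  assert (Hch : forall p : nat * (Y -> Prop), exists B : nat -> X -> Prop,
     (fst p <= n)%nat -> U (fst p) (snd p) ->
     (forall x, snd p (f x) -> exists j, (j <= k)%nat /\ B j x) /\
     (forall j, (j <= k)%nat -> components_diam_le (B j) (s (fst p)) (a * s (fst p) + b * (c * R')))).
  { intros [i V]. simpl.
    destruct (classic ((i <= n)%nat /\ U i V)) as [[Hi UV] | Hn].
    - assert (Hcr : 0 < c * R') by (apply Rmult_lt_0_compat; auto).
      destruct (Hctl (s i) (c * R') (Hs i) Hcr (fun x => V (f x))) as [B [HB1 [HB2 HB3]]].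
      { intros x y Vx Vy. exact (proj2 (HU1 i Hi) V UV _ _ Vx Vy). }
      exists B. intros _ _. split; auto.
    - exists (fun _ _ => False). intros Hi UV. exfalso. auto. }
  destruct (functional_choice _ Hch) as [Bf HBf].
  set (Bd := fun i V => Bf (i, V)).
  set (CC := Cb f n k U Bd rho).
  assert (Hstep : forall i, (i <= n)%nat ->
     (forall t, components_diam_le (CC i t) (3 * rho i) (Ec a b c L' n i * r)) ->
     forall u, components_diam_le (CC (S i) u) (rho i) (Ec a b c L' n (S i) * r)).
  { intros i Hi HC u.
    assert (HE : 0 <= Ec a b c L' n i * r).
    { apply Rmult_le_pos; [|lra]. apply Ec_nonneg; auto; unfold L'; lra. }
    assert (HDP : 0 <= a * s i + b * (c * R')).
    { pose proof (Hs i). assert (0 <= a * s i) by (apply Rmult_le_pos; lra).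
      assert (0 <= b * (c * R')) by (apply Rmult_le_pos; [lra|]; apply Rmult_le_pos; lra). lra. }
    eapply cd_mono; [apply (step_lemma f n k U Bd rho i L' R' (s i)
                             (a * s i + b * (c * R')) (Ec a b c L' n i * r)) | | | ].
    - exact HL'.
    - unfold L'; lra.
    - intros V V' UV UV' ne y y' Vy V'y'. exact (proj1 (HU1 i Hi) V V' UV UV' ne y y' Vy V'y').
    - unfold R'. pose proof (Hrho0 i). pose proof (Hrho i). pose proof (Hrho 0%nat).
      assert (0 < L') by (unfold L'; lra).
      assert (L' * rho i <= L' * rho 0%nat) by (apply Rmult_le_compat_l; lra). nra.
    - exact HR'.
    - intros V UV j Hj. exact (proj2 (HBf (i, V) Hi UV) j Hj).
    - exact HC.
    - exact HE.
    - pose proof (Hrho i); lra.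
    - unfold s, rho. lra.
    - exact HDP.
    - intros z Hz; exact Hz.
    - lra.
    - simpl. unfold s, R', rho. simpl. rewrite Nat.sub_0_r. lra. }
  assert (Hinv : forall i, (i <= n)%nat -> forall u,
     components_diam_le (CC (S i) u) (rho i) (Ec a b c L' n (S i) * r)).
  { induction i; intros Hi u.
    - apply Hstep; auto. intros t x y Hxy. exfalso. exact (chain_B_l _ _ _ _ Hxy).
    - apply Hstep; auto. intros t. replace (3 * rho (S i)) with (rho i).
      apply IHi; lia. unfold rho. replace (n - i)%nat with (S (n - S i)) by lia. simpl. lra. }
  set (Cf := CC (S n)).
  assert (Hfin : forall u, components_diam_le (Cf u) r (Ec a b c L' n (S n) * r)).
  { intros u. replace r with (rho n) at 1. apply Hinv; lia.
    unfold rho. rewrite Nat.sub_diag. simpl. lra. }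
  exists (fun u W => exists x0, Cf u x0 /\ W = (fun y => r_chain (Cf u) r x0 y)).
  split.
  - intros u Hu. split.
    + intros W1 W2 (x1 & Cx1 & ->) (x2 & Cx2 & ->) ne y1 y2 H1 H2.
      destruct (Rle_lt_dec r (dist y1 y2)) as [ok | lt]; auto. exfalso. apply ne.
      assert (H12 : r_chain (Cf u) r x1 y2).
      { eapply r_chain_step; eauto. eapply chain_B_r; eauto. lra. }
      apply functional_extensionality. intros z. apply propositional_extensionality. split.
      * intros Hz. eapply chain_concat; [exact H2|]. eapply chain_concat; [apply chain_rev; exact H12|]. exact Hz.
      * intros Hz. eapply chain_concat; [exact H12|]. eapply chain_concat; [apply chain_rev; exact H2|]. exact Hz.
    + intros W (x0 & Cx0 & ->) y y' Hy Hy'.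
      assert (dist y y' <= Ec a b c L' n (S n) * r).
      { apply (Hfin u). eapply chain_concat; [apply chain_rev; exact Hy| exact Hy']. }
      lra.
  - intros x. destruct (HU2 (f x)) as (i & Hi & V & UV & Vfx).
    destruct (proj1 (HBf (i, V) Hi UV) x Vfx) as (j & Hj & Bx).
    destruct (first_u (fun t => ~ near (rho i) (CC i t) x) (i + j) (k - j)) as (u & Hu1 & Hu2 & Hu3).
    { intros [q [Cq _]]. apply Cb_bound in Cq. lia. }
    assert (Cx : Cf u x).
    { unfold Cf. apply (Cb_mono _ _ _ _ _ _ (S i)). lia. simpl. right.
      split; auto. split. lia. split.
      - exists V. split; auto. split; auto. exists j. split; auto. split. lia. split. exact Bx.
        intros t Ht1 Ht2. apply NNPP. apply Hu3; lia.
      - replace (i + j + (k - j))%nat with (i + k)%nat in Hu1 by lia. exact Hu2. }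
    exists u. split. lia.
    exists (fun y => r_chain (Cf u) r x y). split; [| apply r_chain_refl; exact Cx].
    exists x. split; auto.
Qed.
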